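(* Let $f,g\in\mathcal F^{\,r}_{op}$ and suppose $\tilde g(x)\le\tilde f(x)$ for all $x>0$. Then for every $n$, every faithful $\rho\in\mathcal D_n^1$ and every self-adjoint $A\in M_n(\mathbb C)$, $$I^f_\rho(A)\le I^g_\rho(A).$$
   Context: $\mathcal F_{op}$ is the class of functions $f:(0,\infty)\to(0,\infty)$ that are operator monotone, satisfy $f(1)=1$ and $tf(t^{-1})=f(t)$ for all $t>0$. $f(0):=\lim_{x\to0^+}f(x)$, and $\mathcal F^{\,r}_{op}=\{f\in\mathcal F_{op}: f(0)\neq0\}$. For $f\in\mathcal F^{\,r}_{op}$ and $x>0$, $\tilde f(x):=\frac12\big[(x+1)-(x-1)^2\frac{f(0)}{f(x)}\big]$. $\mathcal D_n^1$ is the set of strictly positive $n\times n$ density matrices. For $x,y>0$, $m_f(x,y)=xf(y/x)$; $L_\rho(X)=\rho X$, $R_\rho(X)=X\rho$, and $m_f(L_\rho,R_\rho)$ multiplies the entry $X_{ij}$ of $X$ (in an orthonormal eigenbasis of $\rho$ with eigenvalues $\lambda_i$) by $m_f(\lambda_i,\lambda_j)$. $\|X\|^2_{\rho,f}=\mathrm{Tr}\big(X^* m_f(L_\rho,R_\rho)^{-1}(X)\big)$. The $f$-information is $I^f_\rho(A)=\frac{f(0)}{2}\|i[\rho,A]\|^2_{\rho,f}$. *)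

(* Defs.v *)
From HB Require Import structures.
From mathcomp Require Import all_boot all_order all_algebra.
From mathcomp Require Import sesquilinear spectral.
From mathcomp Require Import complex.
From mathcomp Require Import all_classical all_reals all_analysis.
Set Implicit Arguments. Unset Strict Implicit. Unset Printing Implicit Defensive.
Import Order.TTheory GRing.Theory Num.Theory.
Import numFieldNormedType.Exports.
Local Open Scope ring_scope.
Local Open Scope sesquilinear_scope.
Local Open Scope complex_scope.
Local Open Scope classical_set_scope.

Section Defs.
Variable R : realType.
Local Notation C := R[i].

Definition adj {m n} (M : 'M[C]_(m, n)) : 'M[C]_(n, m) := M ^t*.

Definition selfadjoint {n} (M : 'M[C]_n) : Prop := adj M = M.

(* positive semidefinite: <v, M v> is a nonnegative real for all v
   (the order on C = R[i] is: x <= y iff y - x is a nonnegative real) *)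
Definition psd {n} (M : 'M[C]_n) : Prop :=
  forall v : 'rV[C]_n, 0 <= (v *m M *m adj v) 0 0.

Definition pd {n} (M : 'M[C]_n) : Prop :=
  forall v : 'rV[C]_n, v != 0 -> 0 < (v *m M *m adj v) 0 0.

Definition loewner_le {n} (A B : 'M[C]_n) : Prop := psd (B - A).

Definition rdiag {n} (d : 'I_n -> R) : 'M[C]_n := diag_mx (\row_i (d i)%:C).

(* functional calculus: for U unitary and d real, f(U diag(d) U^* ) = U diag(f o d) U^* *)
Definition fcalc {n} (f : R -> R) (U : 'M[C]_n) (d : 'I_n -> R) : 'M[C]_n :=
  U *m rdiag (fun i => f (d i)) *m adj U.

Definition operator_monotone (f : R -> R) : Prop :=
  forall (m : nat) (U V : 'M[C]_m) (d e : 'I_m -> R),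
    U \is unitarymx -> V \is unitarymx ->
    (forall i, 0 < d i) -> (forall i, 0 < e i) ->
    loewner_le (U *m rdiag d *m adj U) (V *m rdiag e *m adj V) ->
    loewner_le (fcalc f U d) (fcalc f V e).

Definition Fop (f : R -> R) : Prop :=
  [/\ (forall x, 0 < x -> 0 < f x),
      operator_monotone f,
      f 1 = 1 &
      (forall t, 0 < t -> t * f t^-1 = f t)].

Definition f0 (f : R -> R) : R := lim (f x @[x --> (0:R)^'+]).

Definition Fop_r (f : R -> R) : Prop := Fop f /\ f0 f != 0.

Definition ftilde (f : R -> R) (x : R) : R :=
  2^-1 * ((x + 1) - (x - 1) ^+ 2 * (f0 f / f x)).

Definition mf (f : R -> R) (x y : R) : R := x * f (y / x).

Definition strict_density {n} (rho : 'M[C]_n) : Prop :=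
  pd rho /\ \tr rho = 1.

(* m_f(L_rho, R_rho)^{-1} (X), computed in the orthonormal eigenbasis given by
   the columns of U, where rho = U diag(lam) U^* *)
Definition mf_LR_inv {n} (f : R -> R) (U : 'M[C]_n) (lam : 'I_n -> R)
    (X : 'M[C]_n) : 'M[C]_n :=
  U *m (\matrix_(i, j) ((adj U *m X *m U) i j / (mf f (lam i) (lam j))%:C))
    *m adj U.

Definition fnorm2 {n} (f : R -> R) (U : 'M[C]_n) (lam : 'I_n -> R)
    (X : 'M[C]_n) : C :=
  \tr (adj X *m mf_LR_inv f U lam X).

Definition finfo {n} (f : R -> R) (rho : 'M[C]_n) (U : 'M[C]_n)
    (lam : 'I_n -> R) (A : 'M[C]_n) : C :=
  (f0 f / 2)%:C * fnorm2 f U lam ('i *: (rho *m A - A *m rho)).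

End Defs.

(* Main.v *)
Require Import Defs.
From HB Require Import structures.
From mathcomp Require Import all_boot all_order all_algebra.
From mathcomp Require Import sesquilinear spectral.
From mathcomp Require Import complex.
From mathcomp Require Import all_classical all_reals all_analysis.
Import Order.TTheory GRing.Theory Num.Theory.
Local Open Scope ring_scope.
Local Open Scope complex_scope.
From mathcomp Require Import ring lra.

Section S.
Context {R : realType}.
Local Notation C := R[i].
Local Open Scope sesquilinear_scope.
Lemma adjE m n (M : 'M[C]_(m,n)) i j : adj M i j = (M j i)^*%R.
Proof. by rewrite /adj !mxE. Qed.
Lemma adjM m n p (A : 'M[C]_(m,n)) (B : 'M[C]_(n,p)) : adj (A *m B) = adj B *m adj A.
Proof. by rewrite /adj trmx_mul map_mxM. Qed.
Lemma adjK m n (A : 'M[C]_(m,n)) : adj (adj A) = A.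
Proof. exact: trmxCK. Qed.
Lemma key (f g : R -> R) (a b : R) : 0 < a -> 0 < b ->
  (forall x, 0 < x -> 0 < f x) -> (forall x, 0 < x -> 0 < g x) ->
  (forall x : R, 0 < x -> ftilde g x <= ftilde f x) ->
  f0 f / 2 * (a - b) ^+ 2 / mf f a b <= f0 g / 2 * (a - b) ^+ 2 / mf g a b.
Proof.
move=> a0 b0 fp gp H.
have x0 : 0 < b / a by rewrite divr_gt0.
have := H _ x0; rewrite /ftilde /mf => Hx.
have E : forall h, 0 < h (b/a) -> f0 h / 2 * (a - b) ^+ 2 / (a * h (b / a))
   = a / 2 * ((b/a - 1) ^+ 2 * (f0 h / h (b/a))).
  move=> h hp; field; apply/andP; split; rewrite gt_eqF //.
rewrite !E ?fp ?gp //; apply: ler_wpM2l; first by rewrite divr_ge0 // ltW.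
move: Hx; rewrite ler_pM2l ?invr_gt0 ?ltr0n // lerD2l lerN2 //.
Qed.

Lemma lam_pos n (rho U : 'M[C]_n) (lam : 'I_n -> R) :
  pd rho -> U \is unitarymx -> rho = U *m rdiag lam *m adj U -> forall i, 0 < lam i.
Proof.
move=> Hpd Uu E i; subst rho.
have WU : adj U *m U = 1%:M by have := mulmxKtV (1%:M) Uu erefl; rewrite mul1mx.
have UW : U *m adj U = 1%:M by apply/unitarymxP.
pose v : 'rV[C]_n := delta_mx 0 i *m adj U.
have vn : v != 0.
  apply/negP=> /eqP v0; have := congr1 (fun M => M *m U) v0.
  rewrite /v -mulmxA WU mulmx1 mul0mx => /matrixP /(_ 0 i); rewrite !mxE !eqxx /=.
  by move/eqP; rewrite oner_eq0.
have := Hpd v vn; rewrite /v adjM adjK.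
have -> : delta_mx (0:'I_1) i *m adj U *m (U *m rdiag lam *m adj U) *m (U *m adj (delta_mx (0:'I_1) i))
  = delta_mx 0 i *m rdiag lam *m adj (delta_mx (0:'I_1) i).
  by rewrite !mulmxA -(mulmxA _ (adj U) U) WU mulmx1 -(mulmxA _ (adj U) U) WU mulmx1.
have -> : adj (delta_mx (0:'I_1) i : 'M[C]_(1,n)) = (delta_mx i 0 : 'M[C]_(n,1)).
  apply/matrixP=> k l; rewrite adjE !mxE.
  by rewrite andbC; apply: conj_Creal; apply: realn.
rewrite -rowE -colE !mxE eqxx /= mulr1n.
by rewrite ltcR.
Qed.
Lemma fnorm2_E (h : R -> R) n (U : 'M[C]_n) (lam : 'I_n -> R) (X : 'M[C]_n) :
  U \is unitarymx ->
  fnorm2 h U lam X = \sum_i \sum_j ((adj U *m X *m U) j i)^*%R *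
       ((adj U *m X *m U) j i / (mf h (lam j) (lam i))%:C).
Proof.
move=> Uu; rewrite /fnorm2 /mf_LR_inv.
set M := \matrix_(i, j) _.
rewrite !mulmxA mxtrace_mulC !mulmxA.
have -> : adj U *m adj X *m U = adj (adj U *m X *m U) by rewrite !adjM adjK mulmxA.
rewrite /mxtrace; apply: eq_bigr => i _; rewrite mxE; apply: eq_bigr => j _.
by rewrite adjE /M !mxE.
Qed.
Lemma Yentry n (rho A U : 'M[C]_n) (lam : 'I_n -> R) :
  U \is unitarymx -> rho = U *m rdiag lam *m adj U -> forall j i,
  (adj U *m ('i *: (rho *m A - A *m rho)) *m U) j i
   = 'i * ((lam j - lam i)%:C * (adj U *m A *m U) j i).
Proof.
move=> Uu E j i.
have WU : adj U *m U = 1%:M by have := mulmxKtV (1%:M) Uu erefl; rewrite mul1mx.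
have UW : U *m adj U = 1%:M by apply/unitarymxP.
have E1 : adj U *m rho = rdiag lam *m adj U by rewrite E !mulmxA WU mul1mx.
have E2 : rho *m U = U *m rdiag lam by rewrite E -!mulmxA WU mulmx1.
rewrite -scalemxAr -scalemxAl mulmxBr mulmxBl.
rewrite !mulmxA E1 -(mulmxA _ rho U) E2 !mulmxA.
rewrite -!(mulmxA (rdiag lam *m adj U)) -!(mulmxA (rdiag lam)).
rewrite (mulmxA (adj U) A U).
set B := adj U *m A *m U.
rewrite /rdiag mul_diag_mx mul_mx_diag !mxE.
rewrite rmorphB /=; ring.
Qed.
Lemma term_eq (h : R -> R) (r m : R) (b : C) : m != 0 ->
  (f0 h / 2)%:C * (('i * (r%:C * b))^*%R * ('i * (r%:C * b) / m%:C))
  = (f0 h / 2 * r ^+ 2 / m)%:C * (b * b^*%R).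
Proof.
move=> m0.
have cr : (r%:C)^*%R = r%:C by apply: conj_Creal; apply/complex_realP; exists r.
rewrite !rmorphM /= conjCi cr.
have ii : 'i * 'i = -1 :> C by rewrite -expr2 sqrCi.
rewrite ?rmorphXn ?fmorphV /=.
transitivity (- ('i * 'i) * ((f0 h)%:C / 2%:C * (r%:C * r%:C) / m%:C * (b * b^*%R))); first by ring.
rewrite ii opprK mul1r; ring.
Qed.
End S.

Theorem mainTheorem4 (R : realType) (f g : R -> R) :
  Fop_r f -> Fop_r g ->
  (forall x : R, 0 < x -> ftilde g x <= ftilde f x) ->
  forall (n : nat) (rho : 'M[R[i]]_n) (A : 'M[R[i]]_n)
         (U : 'M[R[i]]_n) (lam : 'I_n -> R),
    strict_density rho ->
    U \is unitarymx -> rho = U *m rdiag lam *m adj U ->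
    selfadjoint A ->
    finfo f rho U lam A <= finfo g rho U lam A.
Proof.
move=> [[fp _ _ _] _] [[gp _ _ _] _] H n rho A U lam [Hpd _] Uu E _.
have lp := @lam_pos R n rho U lam Hpd Uu E.
have mfp : forall h : R -> R, (forall x, 0 < x -> 0 < h x) -> forall a b, 0 < a -> 0 < b -> mf h a b != 0.
  by move=> h hp a b a0 b0; rewrite /mf gt_eqF // mulr_gt0 // hp // divr_gt0.
rewrite /finfo !fnorm2_E // !mulr_sumr; apply: ler_sum => i _.
rewrite !mulr_sumr; apply: ler_sum => j _.
rewrite (@Yentry R n rho A U lam Uu E) !term_eq ?mfp //.
apply: ler_wpM2r; first by [rewrite mul_conjC_ge0 | rewrite mulrC mul_conjC_ge0 | apply: mul_conjC_ge0 | idtac].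
by rewrite lecR; apply: key.
Qed.
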